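(* Let $d\ge2$ be an integer and $R>0$. There exists $R'>0$ depending only on $R$ (and $d$) such that the following holds: whenever $D_1,\dots,D_d$ are real numbers with $|D_i|\le R$ for all $i$, $D=\sum_iD_i$, and $(\lambda,L)\in\mathbb{R}\times C^1([0,1];\mathbb{R}^d)$ satisfies $$(d-1)\lambda=\sum_{i=1}^dL_i(0)^2-\Big(\sum_{i=1}^dL_i(0)\Big)^2,\qquad L_i'=-\Big(\sum_{k=1}^dL_k\Big)L_i-\lambda\ \text{ on }[0,1],\qquad\int_0^1L_i=D_i$$ for $i=1,\dots,d$, then $|\lambda|<R'$ and $|L_i(r)|<R'$ for all $r\in[0,1]$ and $i=1,\dots,d$. *)

(* Defs.v *)
From Stdlib Require Import Reals Lra Lia.
From Coquelicot Require Import Coquelicot.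
Open Scope R_scope.

Fixpoint sum_lt (d : nat) (f : nat -> R) : R :=
  match d with
  | O => 0
  | S n => sum_lt n f + f n
  end.

Definition is_deriv_01 (f : R -> R) (r l : R) : Prop :=
  filterlim (fun h => (f (r + h) - f r) / h)
    (within (fun h => h <> 0 /\ 0 <= r + h <= 1) (locally 0))
    (locally l).

Definition C1_01 (f f' : R -> R) : Prop :=
  (forall r, 0 <= r <= 1 -> is_deriv_01 f r (f' r)) /\
  (forall r, 0 <= r <= 1 ->
     filterlim f' (within (fun t => 0 <= t <= 1) (locally r)) (locally (f' r))).

(* Main.v *)
Require Import Defs.
From Stdlib Require Import Reals Lra Lia.
From Coquelicot Require Import Coquelicot.
Open Scope R_scope.

Lemma Rabs_le_inv x y : Rabs x <= y -> - y <= x <= y.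
Proof. unfold Rabs; destruct (Rcase_abs x); intros; lra. Qed.

Lemma DplusR f g x a b : is_derive f x a -> is_derive g x b -> is_derive (fun y => f y + g y) x (a + b).
Proof. intros; exact (is_derive_plus f g x a b H H0). Qed.
Lemma DminusR f g x a b : is_derive f x a -> is_derive g x b -> is_derive (fun y => f y - g y) x (a - b).
Proof. intros; exact (is_derive_minus f g x a b H H0). Qed.
Lemma DmultR f g x a b : is_derive f x a -> is_derive g x b -> is_derive (fun y => f y * g y) x (a * g x + f x * b).
Proof. intros; exact (is_derive_mult f g x a b H H0 Rmult_comm). Qed.
Lemma DoppR f x a : is_derive f x a -> is_derive (fun y => - f y) x (- a).
Proof. intros; exact (is_derive_opp f x a H). Qed.
Lemma DconstR (c x : R) : is_derive (fun _ : R => c) x 0.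
Proof. exact (is_derive_const c x). Qed.
Lemma DidR (x : R) : is_derive (fun y : R => y) x 1.
Proof. exact (is_derive_id x). Qed.
Lemma DexpR f x a : is_derive f x a -> is_derive (fun y => exp (f y)) x (a * exp (f x)).
Proof. intros. exact (is_derive_comp exp f x (exp (f x)) a (is_derive_exp _) H). Qed.
Lemma DextR (f : R -> R) (x a b : R) : is_derive f x a -> a = b -> is_derive f x b.
Proof. intros; subst; auto. Qed.

Lemma CplusR f g x : continuous f x -> continuous g x -> continuous (fun y:R => f y + g y) x.
Proof. intros; exact (continuous_plus f g x H H0). Qed.
Lemma CminusR f g x : continuous f x -> continuous g x -> continuous (fun y:R => f y - g y) x.
Proof. intros; exact (continuous_minus f g x H H0). Qed.
Lemma CmultR f g x : continuous f x -> continuous g x -> continuous (fun y:R => f y * g y) x.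
Proof. intros; exact (continuous_mult f g x H H0). Qed.
Lemma CoppR f x : continuous f x -> continuous (fun y:R => - f y) x.
Proof. intros; exact (continuous_opp f x H). Qed.
Lemma CconstR (c x : R) : continuous (fun _:R => c) x.
Proof. exact (continuous_const c x). Qed.
Lemma CidR (x : R) : continuous (fun y:R => y) x.
Proof. exact (continuous_id x). Qed.

Lemma mono_le (g g' : R -> R) a b : a <= b ->
  (forall x, a <= x <= b -> continuous g x) ->
  (forall x, a < x < b -> is_derive g x (g' x)) ->
  (forall x, a < x < b -> g' x <= 0) -> g b <= g a.
Proof.
  intros Hab Hc Hd Hn.
  destruct (Req_dec a b) as [->|Hne]; [lra|].
  set (g'' := fun x => if Rlt_dec a x then if Rlt_dec x b then g' x else 0 else 0).
  assert (HM := MVT_gen g a b g''). simpl in HM. rewrite Rmin_left, Rmax_right in HM by lra.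
 assert (P1 : forall x, a < x < b -> is_derive g x (g'' x)).
  {  intros x Hx. unfold g''.
    destruct (Rlt_dec a x) as [|n]; [|exfalso; apply n; lra]. destruct (Rlt_dec x b) as [|n]; [|exfalso; apply n; lra]. auto. }
  assert (P2 : forall x, a <= x <= b -> continuity_pt g x).
  { intros x Hx. apply continuity_pt_filterlim. apply Hc; lra. }
  destruct (HM P1 P2) as [c [Hcr E]].
  assert (g'' c <= 0).
    { unfold g''. destruct (Rlt_dec a c); [|right; reflexivity]. destruct (Rlt_dec c b); [|right; reflexivity]. apply Hn; lra. }
    assert (g'' c * (b - a) <= 0) by (apply Rmult_le_0_r; lra). lra.
Qed.

Lemma gron (z a : R -> R) M :
  (forall x, 0 <= x <= 1 -> continuous z x) ->
  (forall x, 0 < x < 1 -> is_derive z x (a x * z x)) ->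
  (forall x, 0 < x < 1 -> Rabs (a x) <= M) ->
  forall x, 0 <= x <= 1 ->
    z x ^ 2 * exp (-(2*M) * x) <= z 0 ^ 2 /\ z 0 ^ 2 <= z x ^ 2 * exp (2*M*x).
Proof.
  intros Hc Hd Ha x Hx. split.
  - set (g := fun y => z y ^ 2 * exp (-(2*M) * y)).
    assert (g x <= g 0).
    { apply (mono_le g (fun y => (2 * a y - 2 * M) * z y ^ 2 * exp (-(2*M) * y))); try lra.
      - intros y Hy. unfold g. apply CmultR.
        + apply (CmultR (fun y => z y) (fun y => z y * 1)). apply Hc; lra.
          apply (CmultR z (fun _ => 1)). apply Hc; lra. apply CconstR.
        + apply continuous_exp_comp. apply (CmultR (fun _ => -(2*M)) (fun y => y)); [apply CconstR|apply CidR].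
      - intros y Hy. unfold g. eapply DextR.
        apply DmultR. apply is_derive_pow. apply Hd; lra.
        apply DexpR. apply (is_derive_scal (fun y => y)). apply DidR.
        simpl. ring.
      - intros y Hy. assert (Rabs (a y) <= M) by (apply Ha; lra).
        apply Rabs_le_inv in H. 
        apply Rmult_le_0_r. 2: left; apply exp_pos.
        apply Rmult_le_0_r. lra. nra. }
    unfold g in H. replace (-(2*M)*0) with 0 in H by ring. rewrite exp_0 in H. lra.
  - set (g := fun y => - (z y ^ 2 * exp ((2*M) * y))).
    assert (g x <= g 0).
    { apply (mono_le g (fun y => - ((2 * a y + 2 * M) * z y ^ 2 * exp ((2*M) * y)))); try lra.
      - intros y Hy. unfold g. apply CoppR. apply CmultR.
        + apply (CmultR (fun y => z y) (fun y => z y * 1)). apply Hc; lra.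
          apply (CmultR z (fun _ => 1)). apply Hc; lra. apply CconstR.
        + apply continuous_exp_comp. apply (CmultR (fun _ => (2*M)) (fun y => y)); [apply CconstR|apply CidR].
      - intros y Hy. unfold g. eapply DextR. apply DoppR.
        apply DmultR. apply is_derive_pow. apply Hd; lra.
        apply DexpR. apply (is_derive_scal (fun y => y)). apply DidR.
        simpl. ring.
      - intros y Hy. assert (Rabs (a y) <= M) by (apply Ha; lra).
        apply Rabs_le_inv in H.
        assert (0 <= (2 * a y + 2 * M) * z y ^ 2 * exp (2 * M * y)).
        apply Rmult_le_pos. 2: left; apply exp_pos. apply Rmult_le_pos. lra. nra. lra. }
    unfold g in H. replace (2*M*0) with 0 in H by ring. rewrite exp_0 in H. lra.
Qed.

Lemma gron0 (z a : R -> R) M :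
  (forall x, 0 <= x <= 1 -> continuous z x) ->
  (forall x, 0 < x < 1 -> is_derive z x (a x * z x)) ->
  (forall x, 0 < x < 1 -> Rabs (a x) <= M) -> z 0 = 0 ->
  forall x, 0 <= x <= 1 -> z x = 0.
Proof.
  intros. destruct (gron z a M H H0 H1 x H3) as [H4 _]. rewrite H2 in H4.
  pose proof (exp_pos (-(2*M)*x)).
  assert (z x ^ 2 <= 0). { apply (Rmult_le_reg_r (exp (-(2*M)*x))); auto. lra. }
  nra.
Qed.

Lemma gron_nz (z a : R -> R) M :
  (forall x, 0 <= x <= 1 -> continuous z x) ->
  (forall x, 0 < x < 1 -> is_derive z x (a x * z x)) ->
  (forall x, 0 < x < 1 -> Rabs (a x) <= M) -> z 0 <> 0 ->
  forall x, 0 <= x <= 1 -> z x <> 0.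
Proof.
  intros. destruct (gron z a M H H0 H1 x H3) as [_ H4]. intro E. rewrite E in H4.
  assert (0 < z 0 ^ 2). { apply pow2_gt_0; auto. }
  simpl in H4. lra.
Qed.

Lemma ball_R (x e y : R) : ball x e y <-> Rabs (y - x) < e.
Proof. split; intro H; exact H. Qed.

Lemma sum_lt_ext n f g : (forall k, (k < n)%nat -> f k = g k) -> sum_lt n f = sum_lt n g.
Proof. induction n; simpl; intros; auto. rewrite IHn by (intros; apply H; lia). rewrite H by lia. auto. Qed.
Lemma sum_lt_plus n f g : sum_lt n (fun k => f k + g k) = sum_lt n f + sum_lt n g.
Proof. induction n; simpl; [ring|rewrite IHn; ring]. Qed.
Lemma sum_lt_scal n c f : sum_lt n (fun k => c * f k) = c * sum_lt n f.
Proof. induction n; simpl; [ring|rewrite IHn; ring]. Qed.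
Lemma sum_lt_const n c : sum_lt n (fun _ => c) = INR n * c.
Proof. induction n; simpl sum_lt; [simpl; ring|rewrite IHn, S_INR; ring]. Qed.
Lemma sum_lt_opp n f : sum_lt n (fun k => - f k) = - sum_lt n f.
Proof. induction n; simpl; [ring|rewrite IHn; ring]. Qed.
Lemma sum_lt_nonneg n f : (forall k, (k < n)%nat -> 0 <= f k) -> 0 <= sum_lt n f.
Proof. induction n; simpl; intros; [lra|]. pose proof (H n ltac:(lia)). pose proof (IHn ltac:(intros; apply H; lia)). lra. Qed.
Lemma sum_lt_le n f g : (forall k, (k < n)%nat -> f k <= g k) -> sum_lt n f <= sum_lt n g.
Proof. induction n; simpl; intros; [lra|]. pose proof (H n ltac:(lia)). pose proof (IHn ltac:(intros; apply H; lia)). lra. Qed.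
Lemma sum_lt_term n f i : (i < n)%nat -> (forall k, (k < n)%nat -> 0 <= f k) -> f i <= sum_lt n f.
Proof.
  induction n; simpl; intros; [lia|].
  assert (0 <= sum_lt n f) by (apply sum_lt_nonneg; intros; apply H0; lia).
  destruct (Nat.eq_dec i n) as [->|]. lra.
  pose proof (IHn ltac:(lia) ltac:(intros; apply H0; lia)). pose proof (H0 n ltac:(lia)). lra.
Qed.
Lemma sum_lt_abs n f c : (forall k, (k < n)%nat -> Rabs (f k) <= c) -> Rabs (sum_lt n f) <= INR n * c.
Proof.
  induction n; simpl sum_lt; intros.
  - simpl. rewrite Rabs_R0. lra.
  - rewrite S_INR. pose proof (H n ltac:(lia)). pose proof (IHn ltac:(intros; apply H; lia)).
    pose proof (Rabs_triang (sum_lt n f) (f n)). lra.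
Qed.
Lemma sum_lt_CS n f : 0 <= sum_lt n (fun k => f k ^ 2) /\ (sum_lt n f) ^ 2 <= INR n * sum_lt n (fun k => f k ^ 2).
Proof.
  induction n; cbn [sum_lt].
  - simpl. lra.
  - destruct IHn as [H0 H1]. rewrite S_INR. cbv beta. split. pose proof (pow2_ge_0 (f n)); lra.
    set (A := sum_lt n f) in *. set (B := sum_lt n (fun k => f k ^ 2)) in *. set (a := f n).
    pose proof (pos_INR n). destruct (Req_dec (INR n) 0) as [E|E].
    + rewrite E in *. rewrite Rmult_0_l in H1. assert (A = 0) by nra. match goal with HA : A = 0 |- _ => rewrite HA end. nra.
    + assert (0 < INR n) by lra.
      assert (INR n * (B + INR n * a^2 - 2 * A * a) >= 0) by (pose proof (pow2_ge_0 (A - INR n * a)); nra).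
      assert (B + INR n * a^2 - 2 * A * a >= 0).
      { destruct (Rle_lt_dec 0 (B + INR n * a^2 - 2 * A * a)). lra. nra. }
      nra.
Qed.
Lemma sum_lt_derive n (f f' : nat -> R -> R) x :
  (forall k, (k < n)%nat -> is_derive (f k) x (f' k x)) ->
  is_derive (fun y => sum_lt n (fun k => f k y)) x (sum_lt n (fun k => f' k x)).
Proof.
  induction n; cbn [sum_lt]; intros.
  - apply DconstR.
  - apply DplusR. apply IHn; intros; apply H; lia. apply H; lia.
Qed.
Lemma sum_lt_cont n (f : nat -> R -> R) x :
  (forall k, (k < n)%nat -> continuous (f k) x) ->
  continuous (fun y => sum_lt n (fun k => f k y)) x.
Proof.
  induction n; cbn [sum_lt]; intros.
  - apply CconstR.
  - apply CplusR. apply IHn; intros; apply H; lia. apply H; lia.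
Qed.
Lemma sum_lt_RInt n (f : nat -> R -> R) a b :
  (forall k, (k < n)%nat -> ex_RInt (f k) a b) ->
  ex_RInt (fun y => sum_lt n (fun k => f k y)) a b /\
  RInt (fun y => sum_lt n (fun k => f k y)) a b = sum_lt n (fun k => RInt (f k) a b).
Proof.
  induction n; cbn [sum_lt]; intros.
  - split. apply (ex_RInt_const a b 0). rewrite RInt_const. unfold scal; simpl. unfold mult; simpl. ring.
  - destruct IHn as [E1 E2]. intros; apply H; lia.
    split. apply (ex_RInt_plus (fun y => sum_lt n (fun k => f k y)) (f n)); [exact E1|apply H; lia].
    assert (E3 := RInt_plus (fun y => sum_lt n (fun k => f k y)) (f n) a b E1 (H n ltac:(lia))).
    rewrite <- E2. exact E3.
Qed.
Lemma argmax n (a : nat -> R) : (1 <= n)%nat -> exists i, (i < n)%nat /\ forall j, (j < n)%nat -> a j <= a i.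
Proof.
  induction n; intros; [lia|].
  destruct (Nat.eq_dec n 0) as [->|Hn].
  - exists 0%nat. split; [lia|]. intros j Hj. assert (j = 0%nat) by lia. subst; lra.
  - destruct IHn as [i [Hi Hm]]; [lia|].
    destruct (Rle_lt_dec (a n) (a i)).
    + exists i. split; [lia|]. intros j Hj. destruct (Nat.eq_dec j n) as [->|]; auto. apply Hm; lia.
    + exists n. split; [lia|]. intros j Hj. destruct (Nat.eq_dec j n) as [->|]. lra. pose proof (Hm j ltac:(lia)). lra.
Qed.

Definition clamp (x : R) := Rmax 0 (Rmin 1 x).
Lemma clamp_in x : 0 <= clamp x <= 1.
Proof. unfold clamp, Rmax, Rmin. repeat destruct Rle_dec; lra. Qed.
Lemma clamp_id x : 0 <= x <= 1 -> clamp x = x.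
Proof. unfold clamp, Rmax, Rmin. repeat destruct Rle_dec; lra. Qed.
Lemma clamp_lip x y : Rabs (clamp y - clamp x) <= Rabs (y - x).
Proof. unfold clamp, Rmax, Rmin. repeat destruct Rle_dec; unfold Rabs; repeat destruct Rcase_abs; lra. Qed.

Lemma d01_eps f r l : is_deriv_01 f r l -> forall eps, 0 < eps -> exists del, 0 < del /\
  forall h, h <> 0 -> Rabs h < del -> 0 <= r + h <= 1 -> Rabs ((f (r + h) - f r) / h - l) < eps.
Proof.
  intros H eps He. unfold is_deriv_01 in H. rewrite filterlim_locally in H.
  destruct (H (mkposreal eps He)) as [del Hd]. exists del. split. apply cond_pos.
  intros h H1 H2 H3. apply ball_R. apply (Hd h). apply ball_R. rewrite Rminus_0_r. auto. split; auto.
Qed.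

Lemma d01_interior f r l : 0 < r < 1 -> is_deriv_01 f r l -> is_derive (fun x => f (clamp x)) r l.
Proof.
  intros Hr H. apply is_derive_Reals. intros eps He.
  destruct (d01_eps f r l H eps He) as [del [Hd Hh]].
  assert (Hm : 0 < Rmin del (Rmin r (1 - r))) by (apply Rmin_pos; [lra| apply Rmin_pos; lra]).
  exists (mkposreal _ Hm). intros h H1 H2. simpl in H2.
  pose proof (Rmin_l del (Rmin r (1-r))). pose proof (Rmin_r del (Rmin r (1-r))).
  pose proof (Rmin_l r (1-r)). pose proof (Rmin_r r (1-r)).
  apply Rabs_def2 in H2 as [H2a H2b].
  rewrite !clamp_id by lra. apply Hh; auto. apply Rabs_def1; lra. lra.
Qed.

Lemma d01_cont f f' : (forall r, 0 <= r <= 1 -> is_deriv_01 f r (f' r)) ->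
  forall x, continuous (fun x => f (clamp x)) x.
Proof.
  intros H x. set (r := clamp x). pose proof (clamp_in x) as Hr. fold r in Hr.
  destruct (d01_eps f r (f' r) (H r Hr) 1 ltac:(lra)) as [del [Hd Hh]].
  apply filterlim_locally. intros eps.
  set (c := Rabs (f' r) + 1).
  assert (Hc : 0 < c) by (pose proof (Rabs_pos (f' r)); unfold c; lra).
  assert (Hm : 0 < Rmin del (eps / c)) by (apply Rmin_pos; [lra| apply Rdiv_lt_0_compat; [apply cond_pos|lra]]).
  exists (mkposreal _ Hm). intros y Hy. change (Rabs (y - x) < Rmin del (eps / c)) in Hy. change (Rabs (f (clamp y) - f r) < eps).
  pose proof (Rmin_l del (eps/c)). pose proof (Rmin_r del (eps/c)).
  pose proof (clamp_lip x y). fold r in H2.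
  set (h := clamp y - r) in *.
  assert (E : clamp y = r + h) by (unfold h; ring). rewrite E.
  destruct (Req_dec h 0) as [Z|Z].
  - rewrite Z, Rplus_0_r, Rminus_diag, Rabs_R0. apply cond_pos.
  - assert (Hq := Hh h Z ltac:(lra) ltac:(pose proof (clamp_in y); lra)).
    assert (Rabs ((f (r + h) - f r) / h) <= c).
    { pose proof (Rabs_triang_inv ((f (r + h) - f r) / h) (f' r)). unfold c. lra. }
    replace (f (r + h) - f r) with ((f (r + h) - f r) / h * h) by (field; auto).
    rewrite Rabs_mult.
    assert (Rabs h < eps / c) by lra.
    apply Rle_lt_trans with (c * Rabs h). apply Rmult_le_compat_r; auto. apply Rabs_pos.
    apply Rmult_lt_compat_l with (r := c) in H4; auto. replace (c * (eps / c)) with (pos eps) in H4 by (field; lra). auto.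
Qed.

Definition Ssum (d : nat) (F : nat -> R -> R) (x : R) := sum_lt d (fun k => F k x).

Lemma exp_le x y : x <= y -> exp x <= exp y.
Proof. intros [H|H]; [left; apply exp_increasing; auto| subst; lra]. Qed.

Lemma cont_pt f x : continuous f x -> continuity_pt f x.
Proof. intro H. apply continuity_pt_filterlim. exact H. Qed.

Lemma RInt_lin (f g : R -> R) a b c : ex_RInt f a b -> ex_RInt g a b ->
  RInt (fun x => f x - c * g x) a b = RInt f a b - c * RInt g a b.
Proof.
  intros Hf Hg.
  apply is_RInt_unique.
  apply (is_RInt_minus (V:=R_NormedModule) f (fun x => c * g x)).
  exact (RInt_correct (V:=R_CompleteNormedModule) f a b Hf).
  apply (is_RInt_scal (V:=R_NormedModule) g a b c). exact (RInt_correct (V:=R_CompleteNormedModule) g a b Hg).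
Qed.

Lemma RInt_scalR (f : R -> R) a b c : ex_RInt f a b ->
  RInt (fun x => c * f x) a b = c * RInt f a b.
Proof.
  intros Hf. apply is_RInt_unique.
  apply (is_RInt_scal (V:=R_NormedModule) f a b c). exact (RInt_correct (V:=R_CompleteNormedModule) f a b Hf).
Qed.

Lemma sq_ratio a b p q : b <> 0 -> a * p - b * q = 0 -> Rabs a <= Rabs b -> q ^ 2 <= p ^ 2.
Proof.
  intros Hb E Hab.
  assert (a ^ 2 <= b ^ 2).
  { rewrite <- (pow2_abs a), <- (pow2_abs b). pose proof (Rabs_pos a). nra. }
  assert (b * q = a * p) by lra.
  assert (b ^ 2 * q ^ 2 = a ^ 2 * p ^ 2) by (replace (b^2*q^2) with ((b*q)^2) by ring; rewrite H0; ring).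
  assert (0 < b ^ 2) by (apply pow2_gt_0; auto).
  assert (b ^ 2 * q ^ 2 <= b ^ 2 * p ^ 2) by (rewrite H1; apply Rmult_le_compat_r; [apply pow2_ge_0|auto]).
  apply (Rmult_le_reg_l (b ^ 2)); auto.
Qed.

Lemma exp_m1_le t : 0 <= t -> exp t - 1 <= t * exp t.
Proof.
  intros Ht. pose proof (exp_ineq1_le (- t)).
  assert (exp (- t) * exp t = 1) by (rewrite <- exp_plus; replace (- t + t) with 0 by ring; apply exp_0).
  pose proof (exp_pos t). nra.
Qed.

Definition Kc (d : nat) (R0 : R) := INR d * R0 + 1.
Definition Bd (d : nat) (R0 : R) := exp (2 * R0 * INR d * exp (Kc d R0)) + Kc d R0.

Section Sys.
Variables (d : nat) (lam R0 : R) (F F' : nat -> R -> R) (Dv : nat -> R).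
Hypothesis Hd : (2 <= d)%nat.
Hypothesis HR0 : 0 <= R0.
Hypothesis Hc : forall i x, (i < d)%nat -> continuous (F i) x.
Hypothesis Hder : forall i x, (i < d)%nat -> 0 < x < 1 -> is_derive (F i) x (F' i x).
Hypothesis Hode : forall i x, (i < d)%nat -> 0 < x < 1 -> F' i x = - Ssum d F x * F i x - lam.
Hypothesis Hint : forall i, (i < d)%nat -> RInt (F i) 0 1 = Dv i.
Hypothesis HDv : forall i, (i < d)%nat -> Rabs (Dv i) <= R0.
Hypothesis Hinit : (INR d - 1) * lam = sum_lt d (fun i => F i 0 ^ 2) - Ssum d F 0 ^ 2.

Local Notation S := (Ssum d F).

Lemma d_ge2 : 2 <= INR d.
Proof. replace 2 with (INR 2) by (simpl; ring). apply le_INR; auto. Qed.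

Lemma S_cont x : continuous S x.
Proof. unfold Ssum. apply sum_lt_cont. intros; apply Hc; auto. Qed.

Lemma S_der x : 0 < x < 1 -> is_derive S x (- S x ^ 2 - INR d * lam).
Proof.
  intros Hx. eapply DextR. unfold Ssum. apply (sum_lt_derive d F F'). intros; apply Hder; auto.
  rewrite (sum_lt_ext d _ (fun k => (- S x) * F k x + (- lam))) by (intros; rewrite Hode; auto; ring).
  rewrite sum_lt_plus, sum_lt_scal, sum_lt_const. fold (Ssum d F x). ring.
Qed.

Lemma S_bnd : exists M, 0 <= M /\ forall x, 0 <= x <= 1 -> Rabs (S x) <= M.
Proof.
  destruct (continuity_ab_maj (fun x => Rabs (S x)) 0 1) as [m [Hm _]]. lra.
  intros c _. apply (continuity_pt_comp S Rabs). apply cont_pt, S_cont. apply Rcontinuity_abs.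
  exists (Rabs (S m)). split. apply Rabs_pos. auto.
Qed.

Lemma sq_der x : 0 < x < 1 ->
  is_derive (fun y => sum_lt d (fun k => F k y ^ 2)) x (sum_lt d (fun k => 2 * F k x * F' k x)).
Proof.
  intros Hx. apply (sum_lt_derive d (fun k y => F k y ^ 2) (fun k y => 2 * F k y * F' k y)).
  intros k Hk. eapply DextR. apply is_derive_pow. apply Hder; auto. simpl. ring.
Qed.

Lemma P_zero x : 0 <= x <= 1 -> sum_lt d (fun k => F k x ^ 2) - S x ^ 2 = (INR d - 1) * lam.
Proof.
  intros Hx. destruct S_bnd as [M [HM0 HM]].
  set (z := fun y => sum_lt d (fun k => F k y ^ 2) - S y ^ 2 - (INR d - 1) * lam).
  assert (z x = 0).
  { apply (gron0 z (fun y => -2 * S y) (2 * M)); auto.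
    - intros y Hy. unfold z. apply CminusR. apply CminusR.
      apply (sum_lt_cont d (fun k y => F k y ^ 2)). intros k Hk.
      apply (CmultR (F k) (fun y => F k y ^ 1)). auto. apply (CmultR (F k) (fun _ => 1)). auto. apply CconstR.
      apply (CmultR S (fun y => S y ^ 1)). apply S_cont. apply (CmultR S (fun _ => 1)). apply S_cont. apply CconstR.
      apply CconstR.
    - intros y Hy. unfold z. eapply DextR. apply DminusR. apply DminusR.
      apply sq_der; auto. apply is_derive_pow. apply S_der; auto. apply DconstR.
      rewrite (sum_lt_ext d _ (fun k => (-2 * S y) * F k y ^ 2 + (-2 * lam) * F k y))
        by (intros; rewrite Hode; auto; ring).
      rewrite sum_lt_plus, !sum_lt_scal. fold (Ssum d F y). simpl. ring.
    - intros y Hy. rewrite Rabs_mult. replace (Rabs (-2)) with 2 by (rewrite Rabs_left; lra).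
      pose proof (HM y ltac:(lra)). lra.
    - unfold z. rewrite <- Hinit. ring. }
  unfold z in H. lra.
Qed.

Lemma dlam_ge x : 0 <= x <= 1 -> - S x ^ 2 <= INR d * lam.
Proof.
  intros Hx. pose proof (P_zero x Hx). destruct (sum_lt_CS d (fun k => F k x)) as [_ H1].
  fold (Ssum d F x) in H1. pose proof d_ge2.
  set (Q := sum_lt d (fun k => F k x ^ 2)) in *. set (s := S x) in *.
  assert (INR d * ((INR d - 1) * lam) >= - (INR d - 1) * s ^ 2) by nra.
  assert ((INR d - 1) * (INR d * lam + s ^ 2) >= 0) by nra.
  destruct (Rle_lt_dec 0 (INR d * lam + s ^ 2)). lra.
  assert ((INR d - 1) * (INR d * lam + s ^ 2) < 0). apply Rmult_pos_neg; lra. lra.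
Qed.

Lemma S_mono x y : 0 <= x -> x <= y -> y <= 1 -> S y <= S x.
Proof.
  intros. apply (mono_le S (fun t => - S t ^ 2 - INR d * lam)); auto.
  intros; apply S_cont. intros; apply S_der; lra.
  intros t Ht. pose proof (dlam_ge t ltac:(lra)). lra.
Qed.

Lemma exS : ex_RInt S 0 1.
Proof. apply (@ex_RInt_continuous R_CompleteNormedModule). intros; apply S_cont. Qed.

Lemma exF i : (i < d)%nat -> ex_RInt (F i) 0 1.
Proof. intros. apply (@ex_RInt_continuous R_CompleteNormedModule). intros; apply Hc; auto. Qed.

Lemma S_int : RInt S 0 1 = sum_lt d Dv.
Proof.
  unfold Ssum. destruct (sum_lt_RInt d F 0 1) as [_ E]. intros; apply exF; auto.
  rewrite E. apply sum_lt_ext. intros; apply Hint; auto.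
Qed.

Lemma D_bnd : Rabs (sum_lt d Dv) <= INR d * R0.
Proof. apply sum_lt_abs. auto. Qed.

Lemma RInt_cst (c : R) : RInt (fun _ : R => c) 0 1 = c.
Proof. rewrite RInt_const. unfold scal; simpl. unfold mult; simpl. ring. Qed.

Lemma lam_lower : - (sum_lt d Dv) ^ 2 <= INR d * lam.
Proof.
  assert (A1 : S 1 <= sum_lt d Dv).
  { rewrite <- S_int, <- (RInt_cst (S 1)). apply RInt_le. lra. apply ex_RInt_const. apply exS.
    intros; apply S_mono; lra. }
  assert (A2 : sum_lt d Dv <= S 0).
  { rewrite <- S_int, <- (RInt_cst (S 0)). apply RInt_le. lra. apply exS. apply ex_RInt_const.
    intros; apply S_mono; lra. }
  destruct (IVT_gen S 0 1 (sum_lt d Dv)) as [r [Hr E]].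
  - intro x. apply cont_pt, S_cont.
  - rewrite Rmin_right, Rmax_left by lra. lra.
  - rewrite Rmin_left, Rmax_right in Hr by lra. rewrite <- E. apply dlam_ge; auto.
Qed.


Definition uf (j : nat) (x : R) := F j x - S x / INR d.

Lemma dpos : 0 < INR d.
Proof. pose proof d_ge2. lra. Qed.

Lemma u_cont j x : (j < d)%nat -> continuous (uf j) x.
Proof.
  intros. unfold uf. apply CminusR. auto. apply (CmultR S (fun _ => / INR d)). apply S_cont. apply CconstR.
Qed.

Lemma u_der j x : (j < d)%nat -> 0 < x < 1 -> is_derive (uf j) x (- S x * uf j x).
Proof.
  intros. unfold uf. eapply DextR. apply DminusR. apply Hder; auto.
  apply (DmultR S (fun _ => / INR d)). apply S_der; auto. apply DconstR.
  rewrite Hode by auto. pose proof dpos. field. lra.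
Qed.

Lemma sum_u2 x : sum_lt d (fun j => uf j x ^ 2) = sum_lt d (fun k => F k x ^ 2) - S x ^ 2 / INR d.
Proof.
  unfold uf. set (s := S x).
  rewrite (sum_lt_ext d _ (fun j => F j x ^ 2 + ((-2 * s / INR d) * F j x + (s / INR d) ^ 2)))
    by (intros; cbv beta; unfold Rdiv; ring).
  rewrite !sum_lt_plus, sum_lt_scal, sum_lt_const. fold (Ssum d F x). fold s.
  pose proof dpos. field. lra.
Qed.

Lemma u_int j : (j < d)%nat -> RInt (uf j) 0 1 = Dv j - sum_lt d Dv / INR d.
Proof.
  intros Hj.
  rewrite (RInt_ext (uf j) (fun x => F j x - / INR d * S x)).
  2:{ intros x _. unfold uf. change (F j x - S x / INR d = F j x - / INR d * S x). field. pose proof dpos; lra. }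
  rewrite RInt_lin. rewrite S_int, Hint by auto. change (Dv j - / INR d * sum_lt d Dv = Dv j - sum_lt d Dv / INR d). field. pose proof dpos; lra.
  apply exF; auto. apply exS.
Qed.

Lemma K_facts : 0 < Kc d R0 /\ (sum_lt d Dv) ^ 2 <= Kc d R0 ^ 2 /\ - Kc d R0 ^ 2 <= INR d * lam.
Proof.
  pose proof dpos. unfold Kc. pose proof D_bnd. apply Rabs_le_inv in H0.
  assert (0 <= INR d * R0) by (apply Rmult_le_pos; lra).
  pose proof lam_lower.
  split. lra. split; nra.
Qed.

Lemma caseA : (forall j, (j < d)%nat -> uf j 0 = 0) -> S 0 <= Bd d R0.
Proof.
  intros Z. destruct K_facts as [HK [_ Hl]]. pose proof dpos. pose proof d_ge2.
  assert (HU : sum_lt d (fun j => uf j 0 ^ 2) = 0).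
  { rewrite (sum_lt_ext d _ (fun _ => 0)). rewrite sum_lt_const; ring.
    intros j Hj. rewrite Z by auto. simpl; ring. }
  rewrite sum_u2 in HU.
  assert (HQ : sum_lt d (fun k => F k 0 ^ 2) = S 0 ^ 2 / INR d) by lra.
  rewrite HQ in Hinit.
  assert (E : INR d * ((INR d - 1) * lam) = - (INR d - 1) * S 0 ^ 2).
  { rewrite Hinit. field. lra. }
  assert (E2 : INR d * lam = - S 0 ^ 2).
  { apply (Rmult_eq_reg_l (INR d - 1)); [|lra]. transitivity (INR d * ((INR d - 1) * lam)); [ring|]. rewrite E. ring. }
  assert (S 0 ^ 2 <= Kc d R0 ^ 2) by lra.
  assert (S 0 <= Kc d R0) by nra.
  unfold Bd. pose proof (exp_pos (2 * R0 * INR d * exp (Kc d R0))). lra.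
Qed.

Lemma caseB_v i : (i < d)%nat -> (forall j, (j < d)%nat -> Rabs (uf j 0) <= Rabs (uf i 0)) -> uf i 0 <> 0 ->
  exists v : R -> R,
    (forall x, continuous v x) /\
    (forall x, 0 < x < 1 -> is_derive v x (- S x * v x)) /\
    (forall x, 0 <= x <= 1 -> 0 < v x) /\
    (forall x, 0 <= x <= 1 -> S x <= INR d * v x + Kc d R0) /\
    RInt v 0 1 <= 2 * R0.
Proof.
  intros Hi Hmax NZ.
  destruct K_facts as [HK [HDK Hl]]. pose proof dpos as Hdp. pose proof d_ge2 as Hd2.
  set (K := Kc d R0) in *.
  set (sg := if Rlt_dec 0 (uf i 0) then 1 else -1).
  assert (Hsg : sg * sg = 1 /\ 0 < sg * uf i 0 /\ Rabs sg = 1).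
  { unfold sg. destruct (Rlt_dec 0 (uf i 0)).
    - rewrite Rabs_R1. split; [ring|split; lra].
    - assert (Rabs (-1) = 1) by (rewrite Rabs_left; lra). rewrite H. split; [ring|split; [|auto]].
      destruct (Rle_lt_or_eq_dec _ _ (Rnot_lt_le _ _ n)) as [h|h]. lra. exfalso; auto. }
  destruct Hsg as [Hsg1 [Hsg2 Hsg3]].
  set (v := fun x => sg * uf i x).
  destruct S_bnd as [M [HM0 HM]].
  assert (vcont : forall x, continuous v x).
  { intros x. unfold v. apply (CmultR (fun _ => sg) (uf i)). apply CconstR. apply u_cont; auto. }
  assert (vder : forall x, 0 < x < 1 -> is_derive v x (- S x * v x)).
  { intros x Hx. unfold v. eapply DextR. apply is_derive_scal. apply u_der; auto. ring. }
  assert (vnz : forall x, 0 <= x <= 1 -> v x <> 0).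
  { apply (gron_nz v (fun x => - S x) M). intros; auto. exact vder.
    intros x Hx. rewrite Rabs_Ropp. apply HM; lra. unfold v; lra. }
  assert (vpos : forall x, 0 <= x <= 1 -> 0 < v x).
  { intros x Hx. destruct (Rlt_le_dec 0 (v x)) as [h|h]; auto. exfalso.
    assert (Hv0 : 0 < v 0) by (unfold v; lra).
    destruct (IVT_gen v 0 x 0) as [c [Hc1 Ec]].
    - intro y. apply cont_pt, vcont.
    - unfold Rmin, Rmax. destruct (Rle_dec (v 0) (v x)); lra.
    - rewrite Rmin_left, Rmax_right in Hc1 by lra. apply (vnz c); auto. lra. }
  assert (ujle : forall j x, (j < d)%nat -> 0 <= x <= 1 -> uf j x ^ 2 <= v x ^ 2).
  { intros j x Hj Hx.
    set (z := fun y => uf j 0 * uf i y - uf i 0 * uf j y).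
    assert (z x = 0).
    { apply (gron0 z (fun y => - S y) M); auto.
      - intros y Hy. unfold z. apply CminusR.
        apply (CmultR (fun _ => uf j 0) (uf i)). apply CconstR. apply u_cont; auto.
        apply (CmultR (fun _ => uf i 0) (uf j)). apply CconstR. apply u_cont; auto.
      - intros y Hy. unfold z. eapply DextR. apply DminusR; apply is_derive_scal; apply u_der; auto. ring.
      - intros y Hy. rewrite Rabs_Ropp. apply HM; lra.
      - unfold z. ring. }
    unfold z in H. unfold v.
    replace ((sg * uf i x) ^ 2) with (uf i x ^ 2) by (replace ((sg * uf i x) ^ 2) with ((sg * sg) * uf i x ^ 2) by ring; rewrite Hsg1; ring).
    apply (sq_ratio (uf j 0) (uf i 0)); auto. }
  exists v. split; [auto|split; [auto|split; [auto|split]]].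
  - intros x Hx.
    pose proof (sum_u2 x) as E1. pose proof (P_zero x Hx) as E2.
    assert (E3 : sum_lt d (fun j => uf j x ^ 2) <= INR d * v x ^ 2).
    { rewrite <- sum_lt_const. apply sum_lt_le. intros; apply ujle; auto. }
    set (Q := sum_lt d (fun k => F k x ^ 2)) in *.
    set (U := sum_lt d (fun j => uf j x ^ 2)) in *.
    set (s := S x) in *. set (w := v x) in *.
    assert (E4 : U = (INR d - 1) * (lam + s ^ 2 / INR d)) by (rewrite E1; replace Q with ((INR d - 1) * lam + s ^ 2) by lra; field; lra).
    assert (E5 : lam + s ^ 2 / INR d <= INR d * w ^ 2).
    { pose proof (pow2_ge_0 w).
      destruct (Rle_lt_dec (lam + s ^ 2 / INR d) 0). nra. nra. }
    assert (E6 : INR d * lam + s ^ 2 <= INR d * (INR d * w ^ 2)).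
    { replace (INR d * lam + s ^ 2) with (INR d * (lam + s ^ 2 / INR d)) by (field; lra).
      apply Rmult_le_compat_l; lra. }
    assert (0 < w) by (apply vpos; auto).
    assert (0 <= INR d * w * K) by (apply Rmult_le_pos; [apply Rmult_le_pos|]; lra).
    assert (s ^ 2 <= (INR d * w + K) ^ 2) by (replace ((INR d * w + K) ^ 2) with (INR d * (INR d * w ^ 2) + 2 * (INR d * w * K) + K ^ 2) by ring; lra).
    assert (0 < INR d * w) by (apply Rmult_lt_0_compat; lra).
    destruct (Rle_lt_dec s 0). lra. nra.
  - assert (E : RInt v 0 1 = sg * (Dv i - sum_lt d Dv / INR d)).
    { unfold v. rewrite RInt_scalR. rewrite u_int; auto.
      apply (@ex_RInt_continuous R_CompleteNormedModule). intros; apply u_cont; auto. }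
    rewrite E. pose proof D_bnd. pose proof (HDv i Hi).
    assert (Rabs (sum_lt d Dv / INR d) <= R0).
    { unfold Rdiv. rewrite Rabs_mult, Rabs_inv, (Rabs_right (INR d)) by lra.
      apply (Rmult_le_reg_l (INR d)); auto. field_simplify; lra. }
    apply Rle_trans with (Rabs (sg * (Dv i - sum_lt d Dv / INR d))). apply Rle_abs.
    rewrite Rabs_mult, Hsg3. pose proof (Rabs_triang (Dv i) (- (sum_lt d Dv / INR d))).
    rewrite Rabs_Ropp in H2. unfold Rminus. lra.
Qed.

Lemma fwd (v : R -> R) :
    (forall x, continuous v x) ->
    (forall x, 0 < x < 1 -> is_derive v x (- S x * v x)) ->
    (forall x, 0 <= x <= 1 -> 0 < v x) ->
    (forall x, 0 <= x <= 1 -> S x <= INR d * v x + Kc d R0) ->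
    RInt v 0 1 <= 2 * R0 -> S 0 <= Bd d R0.
Proof.
  intros vcont vder vpos Sb Iv.
  destruct K_facts as [HK _]. pose proof dpos as Hdp.
  set (K := Kc d R0) in *.
  assert (Hv0 : 0 < v 0) by (apply vpos; lra).
  set (w0 := / v 0).
  assert (Hw0 : 0 < w0) by (apply Rinv_0_lt_compat; auto).
  set (h := fun x => (/ v x + INR d / K) * exp (- K * x)).
  assert (Hh : forall x, 0 <= x <= 1 -> h x <= h 0).
  { intros x Hx.
    apply (mono_le h (fun y => exp (- K * y) * ((S y - K - INR d * v y) / v y))); try lra.
    - intros y Hy. unfold h. apply CmultR. apply CplusR.
      apply continuous_Rinv_comp. auto. apply Rgt_not_eq, vpos; lra. apply CconstR.
      apply continuous_exp_comp. apply (CmultR (fun _ => - K) (fun y => y)). apply CconstR. apply CidR.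
    - intros y Hy. unfold h. eapply DextR. apply DmultR. apply DplusR.
      apply is_derive_inv. apply vder; lra. apply Rgt_not_eq, vpos; lra. apply DconstR.
      apply DexpR. apply (is_derive_scal (fun y => y)). apply DidR.
      assert (v y <> 0) by (apply Rgt_not_eq, vpos; lra). cbv beta. field. split; lra.
    - intros y Hy. assert (0 < v y) by (apply vpos; lra). pose proof (Sb y ltac:(lra)).
      pose proof (exp_pos (- K * y)).
      assert ((S y - K - INR d * v y) / v y <= 0).
      { unfold Rdiv. apply Rmult_le_0_r. lra. left; apply Rinv_0_lt_compat; auto. }
      apply Rmult_le_0_l; lra. }
  assert (Hinv : forall x, 0 <= x <= 1 -> / v x <= exp K * (w0 + INR d * x)).
  { intros x Hx. pose proof (Hh x Hx) as H1. unfold h in H1.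
    replace (- K * 0) with 0 in H1 by ring. rewrite exp_0, Rmult_1_r in H1. fold w0 in H1.
    set (E := exp (K * x)).
    assert (HE : exp (- K * x) * E = 1) by (unfold E; rewrite <- exp_plus; replace (- K * x + K * x) with 0 by ring; apply exp_0).
    assert (HEp : 0 < E) by apply exp_pos.
    assert (H2 : / v x + INR d / K <= (w0 + INR d / K) * E).
    { replace (/ v x + INR d / K) with ((/ v x + INR d / K) * exp (- K * x) * E) by (rewrite Rmult_assoc, HE; ring).
      apply Rmult_le_compat_r; lra. }
    assert (H3 : E <= exp K) by (apply exp_le; nra).
    assert (H4 : E - 1 <= K * x * E) by (apply exp_m1_le; nra).
    assert (H5 : INR d / K * (E - 1) <= INR d * x * exp K).
    { apply Rle_trans with (INR d / K * (K * x * E)).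
      apply Rmult_le_compat_l; auto. apply Rlt_le, Rdiv_lt_0_compat; lra.
      replace (INR d / K * (K * x * E)) with (INR d * x * E) by (field; lra).
      apply Rmult_le_compat_l; auto. apply Rmult_le_pos; lra. }
    assert (H6 : w0 * E <= w0 * exp K) by (apply Rmult_le_compat_l; lra).
    nra. }
  set (g := fun x => exp (- K) * / (w0 + INR d * x)).
  assert (Hg : forall x, 0 <= x <= 1 -> g x <= v x).
  { intros x Hx. unfold g. pose proof (Hinv x Hx). pose proof (vpos x Hx).
    assert (0 < w0 + INR d * x) by nra.
    replace (v x) with (/ / v x) by (field; lra).
    replace (exp (- K) * / (w0 + INR d * x)) with (/ (exp K * (w0 + INR d * x))).
    apply Rinv_le_contravar; auto. apply Rinv_0_lt_compat; auto.
    rewrite exp_Ropp. field. split. lra. apply Rgt_not_eq, exp_pos. }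
  assert (Igv : RInt g 0 1 <= 2 * R0).
  { apply Rle_trans with (RInt v 0 1); auto. apply RInt_le. lra.
    apply (@ex_RInt_continuous R_CompleteNormedModule). intros z Hz.
    rewrite Rmin_left, Rmax_right in Hz by lra. unfold g. apply (CmultR (fun _ => exp (-K))). apply CconstR.
    apply continuous_Rinv_comp. apply (CplusR (fun _ => w0) (fun y => INR d * y)). apply CconstR.
    apply (CmultR (fun _ => INR d) (fun y => y)). apply CconstR. apply CidR. nra.
    apply (@ex_RInt_continuous R_CompleteNormedModule). intros; auto.
    intros; apply Hg; lra. }
  assert (Ig : RInt g 0 1 = exp (- K) / INR d * (ln (w0 + INR d) - ln w0)).
  { apply is_RInt_unique.
    set (f := fun x => exp (- K) / INR d * ln (w0 + INR d * x)).
    replace (exp (- K) / INR d * (ln (w0 + INR d) - ln w0)) with (minus (f 1) (f 0)).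
    apply (is_RInt_derive (V:=R_CompleteNormedModule) f g).
    - intros x Hx. rewrite Rmin_left, Rmax_right in Hx by lra. unfold f, g.
      assert (0 < w0 + INR d * x) by nra.
      eapply DextR. apply is_derive_scal.
      apply (is_derive_comp ln (fun y => w0 + INR d * y)). apply is_derive_ln; auto.
      apply (DplusR (fun _ => w0) (fun y => INR d * y)). apply DconstR. apply (is_derive_scal (fun y => y)). apply DidR.
      unfold scal; simpl; unfold mult; simpl. field. lra.
    - intros z Hz. rewrite Rmin_left, Rmax_right in Hz by lra. unfold g. apply (CmultR (fun _ => exp (-K))). apply CconstR.
      apply continuous_Rinv_comp. apply (CplusR (fun _ => w0) (fun y => INR d * y)). apply CconstR.
      apply (CmultR (fun _ => INR d) (fun y => y)). apply CconstR. apply CidR. nra.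
    - unfold f, minus, plus, opp; simpl. rewrite Rmult_0_r, Rplus_0_r, Rmult_1_r. ring. }
  rewrite Ig in Igv.
  set (T := 2 * R0 * INR d * exp K).
  assert (HT : ln (w0 + INR d) - ln w0 <= T).
  { unfold T. assert (exp (- K) * exp K = 1) by (rewrite <- exp_plus; replace (- K + K) with 0 by ring; apply exp_0).
    pose proof (exp_pos K). pose proof (exp_pos (- K)).
    replace (ln (w0 + INR d) - ln w0) with ((exp (- K) / INR d * (ln (w0 + INR d) - ln w0)) * (INR d * exp K)).
    2:{ rewrite exp_Ropp. field. split; lra. }
    replace (2 * R0 * INR d * exp K) with ((2 * R0) * (INR d * exp K)) by ring.
    apply Rmult_le_compat_r; auto. apply Rmult_le_pos; lra. }
  assert (HT2 : w0 + INR d <= exp T * w0).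
  { rewrite <- (exp_ln (w0 + INR d)) by lra. rewrite <- (exp_ln w0) at 2 by lra.
    rewrite <- exp_plus. apply exp_le. lra. }
  assert (HT3 : 1 + INR d * v 0 <= exp T).
  { assert (w0 * v 0 = 1) by (unfold w0; field; lra).
    apply (Rmult_le_reg_l w0); auto. nra. }
  pose proof (Sb 0 ltac:(lra)). unfold Bd. fold K. fold T. lra.
Qed.

Lemma core : S 0 <= Bd d R0.
Proof.
  destruct (argmax d (fun j => Rabs (uf j 0))) as [i [Hi Hmax]]. lia.
  destruct (Req_dec (uf i 0) 0) as [Z|NZ].
  - apply caseA. intros j Hj. pose proof (Hmax j Hj). simpl in H. rewrite Z, Rabs_R0 in H.
    destruct (Req_dec (uf j 0) 0); auto. pose proof (Rabs_pos_lt _ H0). lra.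
  - destruct (caseB_v i Hi Hmax NZ) as [v [H1 [H2 [H3 [H4 H5]]]]].
    apply (fwd v); auto.
Qed.

Lemma final_bounds B1 : 0 <= B1 -> S 0 <= B1 -> - B1 <= S 1 ->
  Rabs lam <= B1 ^ 2 + 2 * B1 /\
  forall i x, (i < d)%nat -> 0 <= x <= 1 -> Rabs (F i x) <= INR d * (B1 ^ 2 + 2 * B1) + B1 ^ 2 + 1.
Proof.
  intros HB H0 H1. pose proof d_ge2 as Hd2.
  assert (HSx : forall x, 0 <= x <= 1 -> S x ^ 2 <= B1 ^ 2).
  { intros x Hx. pose proof (S_mono 0 x ltac:(lra) ltac:(lra) ltac:(lra)).
    pose proof (S_mono x 1 ltac:(lra) ltac:(lra) ltac:(lra)). nra. }
  assert (Hlo : - B1 ^ 2 <= INR d * lam) by (pose proof (dlam_ge 0 ltac:(lra)); pose proof (HSx 0 ltac:(lra)); lra).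
  assert (Hhi : S 1 + INR d * lam * 1 <= S 0 + INR d * lam * 0).
  { apply (mono_le (fun y => S y + INR d * lam * y) (fun y => - S y ^ 2)). lra.
    intros; apply CplusR. apply S_cont. apply (CmultR (fun _ => INR d * lam) (fun y => y)). apply CconstR. apply CidR.
    intros y Hy. eapply DextR. apply DplusR. apply S_der; auto. apply (is_derive_scal (fun y => y)). apply DidR. ring.
    intros y Hy. pose proof (pow2_ge_0 (S y)). lra. }
  assert (HL : Rabs lam <= B1 ^ 2 + 2 * B1).
  { unfold Rabs. destruct (Rcase_abs lam).
    - assert (INR d * lam <= lam) by nra. lra.
    - assert (lam <= INR d * lam) by nra. pose proof (pow2_ge_0 B1). lra. }
  split; auto.
  intros i x Hi Hx.
  pose proof (P_zero x Hx). pose proof (HSx x Hx).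
  assert (F i x ^ 2 <= sum_lt d (fun k => F k x ^ 2)).
  { apply (sum_lt_term d (fun k => F k x ^ 2)); auto. intros; apply pow2_ge_0. }
  assert ((INR d - 1) * lam <= INR d * (B1 ^ 2 + 2 * B1)).
  { apply Rabs_le_inv in HL. pose proof (pow2_ge_0 B1). nra. }
  assert (Rabs (F i x) <= F i x ^ 2 + 1).
  { rewrite <- (pow2_abs (F i x)). pose proof (pow2_ge_0 (Rabs (F i x) - 1)). nra. }
  lra.
Qed.

End Sys.

Theorem lemma3p7 :
  forall (d : nat), (2 <= d)%nat ->
  forall (R0 : R), 0 < R0 ->
  exists R' : R, 0 < R' /\
    forall (Dv : nat -> R) (lam : R) (L L' : nat -> R -> R),
      (forall i, (i < d)%nat -> Rabs (Dv i) <= R0) ->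
      (forall i, (i < d)%nat -> C1_01 (L i) (L' i)) ->
      INR (d - 1) * lam
        = sum_lt d (fun i => (L i 0) ^ 2) - (sum_lt d (fun i => L i 0)) ^ 2 ->
      (forall i r, (i < d)%nat -> 0 <= r <= 1 ->
         L' i r = - (sum_lt d (fun k => L k r)) * L i r - lam) ->
      (forall i, (i < d)%nat -> RInt (L i) 0 1 = Dv i) ->
      Rabs lam < R' /\
      (forall i r, (i < d)%nat -> 0 <= r <= 1 -> Rabs (L i r) < R').
Proof.
  intros d Hd R0 HR0.
  set (B1 := Bd d R0).
  assert (HB1 : 0 <= B1).
  { unfold B1, Bd, Kc. pose proof (exp_pos (2 * R0 * INR d * exp (INR d * R0 + 1))).
    pose proof (pos_INR d). assert (0 <= INR d * R0) by (apply Rmult_le_pos; lra). lra. }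
  set (Lam := B1 ^ 2 + 2 * B1).
  assert (HLam : 0 <= Lam) by (unfold Lam; pose proof (pow2_ge_0 B1); lra).
  assert (Hdp : 2 <= INR d) by (replace 2 with (INR 2) by (simpl; ring); apply le_INR; auto).
  exists (INR d * Lam + B1 ^ 2 + 2). split.
  { pose proof (pow2_ge_0 B1). assert (0 <= INR d * Lam) by (apply Rmult_le_pos; lra). lra. }
  intros Dv lam L L' HDv HC1 Hinit Hode Hint.
  set (F := fun i x => L i (clamp x)).
  assert (Hc : forall i x, (i < d)%nat -> continuous (F i) x).
  { intros i x Hi. destruct (HC1 i Hi) as [H1 _]. apply (d01_cont (L i) (L' i) H1). }
  assert (Hder : forall i x, (i < d)%nat -> 0 < x < 1 -> is_derive (F i) x (L' i x)).
  { intros i x Hi Hx. destruct (HC1 i Hi) as [H1 _]. apply d01_interior; auto. apply H1; lra. }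
  assert (HSs : forall x, 0 <= x <= 1 -> Ssum d F x = sum_lt d (fun k => L k x)).
  { intros x Hx. unfold Ssum, F. apply sum_lt_ext. intros; rewrite clamp_id; auto. }
  assert (Hode' : forall i x, (i < d)%nat -> 0 < x < 1 -> L' i x = - Ssum d F x * F i x - lam).
  { intros i x Hi Hx. rewrite HSs by lra. unfold F. rewrite clamp_id by lra. apply Hode; auto; lra. }
  assert (Hint' : forall i, (i < d)%nat -> RInt (F i) 0 1 = Dv i).
  { intros i Hi. rewrite <- Hint by auto. apply (RInt_ext (V:=R_CompleteNormedModule)).
    intros x Hx. rewrite Rmin_left, Rmax_right in Hx by lra. unfold F. rewrite clamp_id; auto; lra. }
  assert (Hinit' : (INR d - 1) * lam = sum_lt d (fun i => F i 0 ^ 2) - Ssum d F 0 ^ 2).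
  { rewrite HSs by lra. unfold F. rewrite clamp_id by lra. rewrite <- Hinit.
    rewrite minus_INR by lia. simpl. ring. }
  assert (HR0' : 0 <= R0) by lra.
  assert (HS0 : Ssum d F 0 <= B1) by (exact (core d lam R0 F L' Dv Hd HR0' Hc Hder Hode' Hint' HDv Hinit')).
  set (G := fun i x => - F i (1 - x)).
  set (G' := fun i x => L' i (1 - x)).
  set (Dg := fun i => - Dv i).
  assert (HSG : forall x, Ssum d G x = - Ssum d F (1 - x)).
  { intros x. unfold Ssum, G. apply sum_lt_opp. }
  assert (Gc : forall i x, (i < d)%nat -> continuous (G i) x).
  { intros i x Hi. unfold G. apply CoppR.
    apply (continuous_comp (fun y => 1 - y) (F i)). apply (CminusR (fun _ => 1) (fun y => y)). apply CconstR. apply CidR.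
    apply Hc; auto. }
  assert (Gder : forall i x, (i < d)%nat -> 0 < x < 1 -> is_derive (G i) x (G' i x)).
  { intros i x Hi Hx. unfold G, G'. eapply DextR. apply DoppR.
    apply (is_derive_comp (F i) (fun y => 1 - y)). apply Hder; auto; lra.
    apply (DminusR (fun _ => 1) (fun y => y)). apply DconstR. apply DidR.
    unfold scal; simpl; unfold mult; simpl. ring. }
  assert (Gode : forall i x, (i < d)%nat -> 0 < x < 1 -> G' i x = - Ssum d G x * G i x - lam).
  { intros i x Hi Hx. unfold G'. rewrite HSG. unfold G. rewrite Hode' by (auto; lra). ring. }
  assert (Gint : forall i, (i < d)%nat -> RInt (G i) 0 1 = Dg i).
  { intros i Hi. unfold Dg. rewrite <- (Hint' i Hi).
    assert (exi : ex_RInt (F i) 0 1).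
    { apply (@ex_RInt_continuous R_CompleteNormedModule). intros; apply Hc; auto. }
    assert (E := RInt_comp_lin (V:=R_CompleteNormedModule) (F i) (-1) 1 0 1).
    replace (-1 * 0 + 1) with 1 in E by ring. replace (-1 * 1 + 1) with 0 in E by ring.
    specialize (E ltac:(apply (@ex_RInt_continuous R_CompleteNormedModule); intros; apply Hc; auto)).
    replace (-1 * 0 + 1) with 1 in E by ring. replace (-1 * 1 + 1) with 0 in E by ring.
    assert (E2 := opp_RInt_swap (V:=R_CompleteNormedModule) (F i) 0 1 exi).
    rewrite <- E2 in E. 
    etransitivity; [|exact E].
    apply (RInt_ext (V:=R_CompleteNormedModule)). intros x _. unfold G, scal; simpl; unfold mult; simpl.
      replace (-1 * x + 1) with (1 - x) by ring. ring. }
  assert (GDv : forall i, (i < d)%nat -> Rabs (Dg i) <= R0).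
  { intros i Hi. unfold Dg. rewrite Rabs_Ropp. auto. }
  assert (Ginit : (INR d - 1) * lam = sum_lt d (fun i => G i 0 ^ 2) - Ssum d G 0 ^ 2).
  { rewrite HSG. unfold G. replace (1 - 0) with 1 by ring.
    rewrite <- (P_zero d lam F L' Hc Hder Hode' Hinit' 1 ltac:(lra)).
    f_equal. apply sum_lt_ext. intros; ring. ring. }
  assert (HG0 : Ssum d G 0 <= B1) by (exact (core d lam R0 G G' Dg Hd HR0' Gc Gder Gode Gint GDv Ginit)).
  rewrite HSG in HG0. replace (1 - 0) with 1 in HG0 by ring.
  destruct (final_bounds d lam F L' Hd Hc Hder Hode' Hinit' B1 HB1 HS0 ltac:(lra)) as [HL HF].
  split.
  - fold Lam in HL. pose proof (pow2_ge_0 B1). assert (Lam <= INR d * Lam) by nra. lra.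
  - intros i r Hi Hr. pose proof (HF i r Hi Hr). unfold F in H. rewrite clamp_id in H by auto.
    fold Lam in H. lra.
Qed.
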